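(* In the category $\mathbf{SL}$ with the basic morphisms listed below, the number of facets of each object $A$ is at most $\left(c^{\lim}_{\mathbf{SL},\mathcal{A}}(A)\right)^2$, where $c^{\lim}_{\mathbf{SL},\mathcal{A}}(A)$ is the limit complexity of $A$.
   Context: $\mathbf{SL}$ is the category whose objects are semi-linear sets $A\subset\mathbb{R}^n$ (for varying $n\ge0$) and whose morphisms $(A\subset\mathbb{R}^n)\to(B\subset\mathbb{R}^m)$ are maps $A\to B$ that are restrictions of affine maps $\mathbb{R}^n\to\mathbb{R}^m$. The basic morphisms $\mathcal{A}$ (each of unit cost) are: multiplication by $c$, $\mathbb{R}\xrightarrow{c}\mathbb{R}$, for each $c\in\mathbb{R}$; addition $\mathbb{R}^2\xrightarrow{+}\mathbb{R}$; the inclusion $[0,\infty)\hookrightarrow\mathbb{R}$; and $\mathbb{R}\to 0$ (map to a point). A diagram of finite shape $I=(V,E,s,t)$ assigns objects to vertices and morphisms $D(e):D(s(e))\to D(t(e))$ to edges (no commutativity required); subdiagrams are restrictions to full subgraphs. A limit computation is a sequence of diagrams $(D_0,\dots,D_s)$ where $D_0$ consists only of basic morphisms and each $D_i$ ($i\ge1$) is obtained from $D_{i-1}$ by choosing a full subgraph $J_i$, adding a new vertex $v_i$ carrying a limit of $D_{i-1}|_{J_i}$ with edges from $v_i$ to each vertex of $J_i$ carrying the limit cone morphisms, subject to constructivity: if $v_i$ lies in $J_j$ for some $j>i$ then $J_i\subseteq J_j$. It computes an object $A$ if an object isomorphic to $A$ appears in $D_s$; its cost is $s$ plus the number of edges of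 $D_0$. The limit complexity of $A$ is the minimum cost of a limit computation computing $A$ ($\infty$ if none). Objects computable this way are closed convex polyhedra, and facets are their codimension-one faces. *)

(* Defs.v *)
From HB Require Import structures.
From mathcomp Require Import all_boot all_order all_algebra.
From mathcomp Require Import classical_sets reals.
From Stdlib Require List.
Import Order.TTheory GRing.Theory Num.Theory.
Local Open Scope ring_scope.
Local Open Scope classical_set_scope.

Section SL.
Variable R : realType.

Definition lin (n : nat) (a x : 'cV[R]_n) : R := (a^T *m x) 0 0.
Arguments lin {n}.

(** Semi-linear sets: the Boolean algebra generated by open half-spaces
    (real coefficients). The empty set is the half-space with a = 0, b = 0. *)
Inductive semilinear (n : nat) : set 'cV[R]_n -> Prop :=
| sl_half (a : 'cV[R]_n) (b : R) : semilinear n [set x | 0 < lin a x + b]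
| sl_compl (A : set 'cV[R]_n) : semilinear n A -> semilinear n (~` A)
| sl_union (A B : set 'cV[R]_n) :
    semilinear n A -> semilinear n B -> semilinear n (A `|` B).
Arguments semilinear {n}.

Record obj := Obj {
  odim : nat;
  oset : set 'cV[R]_odim;
  osemilin : semilinear oset }.
Arguments oset : clear implicits.

(** Morphisms of SL: maps A -> B which are restrictions of affine maps
    x |-> M x + b; two morphisms are equal iff they agree on A ([meq]). *)
Record mor (X Y : obj) := Mor {
  mM : 'M[R]_(odim Y, odim X);
  mb : 'cV[R]_(odim Y);
  mmaps : forall x, oset X x -> oset Y (mM *m x + mb) }.
Arguments mM {X Y}.
Arguments mb {X Y}.

Definition mapp (X Y : obj) (f : mor X Y) (x : 'cV[R]_(odim X)) : 'cV[R]_(odim Y) :=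
  mM f *m x + mb f.
Arguments mapp {X Y}.

Definition meq (X Y : obj) (f g : mor X Y) : Prop :=
  forall x, oset X x -> mapp f x = mapp g x.
Arguments meq {X Y}.

Definition iso (X Y : obj) : Prop :=
  exists (f : mor X Y) (g : mor Y X),
    (forall x, oset X x -> mapp g (mapp f x) = x) /\
    (forall y, oset Y y -> mapp f (mapp g y) = y).

(** k-th coordinate of a vector (0 if out of range). *)
Definition coord (n : nat) (v : 'cV[R]_n) (k : nat) : R :=
  if @insub nat (fun m => m < n)%N 'I_n k is Some i then v i 0 else 0.
Arguments coord {n}.

(** The basic morphisms A: multiplication by c on R, addition R^2 -> R,
    inclusion [0,oo) -> R, and R -> 0 (the point R^0). *)
Definition basic (X Y : obj) (f : mor X Y) : Prop :=
  [\/ (odim X = 1%N /\ oset X = setT /\ odim Y = 1%N /\ oset Y = setT /\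
       exists c : R, forall x, oset X x -> coord (mapp f x) 0 = c * coord x 0),
      (odim X = 2%N /\ oset X = setT /\ odim Y = 1%N /\ oset Y = setT /\
       forall x, oset X x -> coord (mapp f x) 0 = coord x 0 + coord x 1),
      (odim X = 1%N /\ oset X = [set x | 0 <= coord x 0] /\ odim Y = 1%N /\
       oset Y = setT /\ forall x, oset X x -> coord (mapp f x) 0 = coord x 0)
    | (odim X = 1%N /\ oset X = setT /\ odim Y = 0%N /\ oset Y = setT)].
Arguments basic {X Y}.

(** Default object (only used as a default for [nth]). *)
Definition obj0 : obj :=
  @Obj 0 (~` [set x | 0 < lin 0 x + 0]) (@sl_compl 0 _ (@sl_half 0 0 0)).

Definition vtx (V : seq obj) (i : nat) : obj := nth obj0 V i.

(** A limit computation (D_0, ..., D_s) is encoded by its final diagram D_s: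
    vertices are 0, ..., size V - 1 carrying the objects [vtx V i];
    vertices 0 .. n0-1 are those of D_0, and vertex n0 + t is the vertex
    v_(t+1) added at step t+1, with chosen full subgraph [J t].
    [E i j] is the list of (parallel) edges from i to j. *)
Record limcomp := LimComp {
  lc_n0 : nat;
  lc_V : seq obj;
  lc_E : forall i j : nat, seq (mor (vtx lc_V i) (vtx lc_V j));
  lc_J : nat -> pred nat }.

Definition is_limit_cone (V : seq obj)
    (E : forall i j : nat, seq (mor (vtx V i) (vtx V j)))
    (J : pred nat) (k : nat) : Prop :=
  (forall a b, J a -> J b -> forall e p q,
      List.In e (E a b) -> List.In p (E k a) -> List.In q (E k b) ->
      forall x, oset (vtx V k) x -> mapp e (mapp p x) = mapp q x) /\
  (forall (X : obj) (g : forall j, J j -> mor X (vtx V j)),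
      (forall a b (ha : J a) (hb : J b) e, List.In e (E a b) ->
         forall x, oset X x -> mapp e (mapp (g a ha) x) = mapp (g b hb) x) ->
      exists u : mor X (vtx V k),
        (forall j (hj : J j) p, List.In p (E k j) ->
           forall x, oset X x -> mapp p (mapp u x) = mapp (g j hj) x) /\
        (forall u' : mor X (vtx V k),
           (forall j (hj : J j) p, List.In p (E k j) ->
              forall x, oset X x -> mapp p (mapp u' x) = mapp (g j hj) x) ->
           meq u u')).

Definition lc_steps (C : limcomp) : nat := (size (lc_V C) - lc_n0 C)%N.

Definition is_limcomp (C : limcomp) : Prop :=
  let n0 := lc_n0 C in let V := lc_V C in let E := lc_E C in
  let J := lc_J C in
  (n0 <= size V)%N /\
  (forall i j, (size V <= i)%N \/ (size V <= j)%N -> E i j = [::]) /\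
  (forall i j, (i < n0)%N -> (n0 <= j)%N -> E i j = [::]) /\
  (forall i j, (i < n0)%N -> (j < n0)%N ->
      forall e, List.In e (E i j) -> basic e) /\
  (forall i, (i < n0)%N ->
      exists j, (j < n0)%N /\ (E i j <> [::] \/ E j i <> [::])) /\
  (forall t, (t < lc_steps C)%N ->
      (forall j, J t j -> (j < n0 + t)%N) /\
      (forall j, size (E (n0 + t) j) = nat_of_bool (J t j)) /\
      is_limit_cone V E (J t) (n0 + t)) /\
  (forall t t', (t < t')%N -> (t' < lc_steps C)%N -> J t' (n0 + t) ->
      forall j, J t j -> J t' j).

Definition lc_cost (C : limcomp) : nat :=
  (lc_steps C + \sum_(i < lc_n0 C) \sum_(j < lc_n0 C) size (lc_E C i j))%N.

Definition lc_computes (C : limcomp) (A : obj) : Prop :=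
  exists i, (i < size (lc_V C))%N /\ iso (vtx (lc_V C) i) A.

(** The limit complexity of A equals c (the minimum cost of a limit
    computation computing A). If no computation exists, the complexity is
    infinite and no such c exists. *)
Definition lim_complexity_is (A : obj) (c : nat) : Prop :=
  (exists C, is_limcomp C /\ lc_computes C A /\ lc_cost C = c) /\
  (forall C, is_limcomp C -> lc_computes C A -> (c <= lc_cost C)%N).

Definition aff_dim_ge (n : nat) (S : set 'cV[R]_n) (k : nat) : Prop :=
  exists (x0 : 'cV[R]_n) (X : 'M[R]_(k, n)),
    S x0 /\ (forall i, S (x0 + (row i X)^T)) /\ \rank X = k.
Arguments aff_dim_ge {n}.

Definition has_dim (n : nat) (S : set 'cV[R]_n) (d : int) : Prop :=
  (S = set0 /\ d = -1) \/
  (exists k : nat, d = k%:Z /\ aff_dim_ge S k /\ ~ aff_dim_ge S k.+1).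
Arguments has_dim {n}.

(** faces of a (closed convex polyhedral) set A: A ∩ {a.x = b} for a
    valid inequality a.x <= b (a = 0 allowed, giving A and the empty face) *)
Definition face (n : nat) (A F : set 'cV[R]_n) : Prop :=
  exists (a : 'cV[R]_n) (b : R),
    (forall x, A x -> lin a x <= b) /\ F = A `&` [set x | lin a x = b].
Arguments face {n}.

Definition facet (n : nat) (A F : set 'cV[R]_n) : Prop :=
  face A F /\ exists d : int, has_dim A d /\ has_dim F (d - 1).

End SL.

Arguments lin {R n}.
Arguments semilinear {R n}.
Arguments odim {R}.
Arguments oset {R}.
Arguments mM {R X Y}.
Arguments mb {R X Y}.
Arguments mapp {R X Y}.
Arguments meq {R X Y}.
Arguments iso {R}.
Arguments coord {R n}.
Arguments basic {R X Y}.
Arguments vtx {R}.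
Arguments is_limit_cone {R}.
Arguments lc_n0 {R}.
Arguments lc_V {R}.
Arguments lc_E {R}.
Arguments lc_J {R}.
Arguments lc_steps {R}.
Arguments is_limcomp {R}.
Arguments lc_cost {R}.
Arguments lc_computes {R}.
Arguments lim_complexity_is {R}.
Arguments aff_dim_ge {R n}.
Arguments has_dim {R n}.
Arguments face {R n}.
Arguments facet {R n}.

(* Main.v *)
Require Import Defs.
From HB Require Import structures.
From mathcomp Require Import all_boot all_order all_algebra.
From mathcomp Require Import classical_sets reals.
From Stdlib Require List.
From mathcomp Require Import zify ring lra boolp.
Require Import Defs.
Import Order.TTheory GRing.Theory Num.Theory.
Set Implicit Arguments. Unset Strict Implicit. Unset Printing Implicit Defensive.

Section FileP1.
Local Open Scope ring_scope.
Local Open Scope classical_set_scope.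

Section Basic.
Variable R : realType.

Lemma linE n (a x : 'cV[R]_n) : lin a x = \sum_i a i 0 * x i 0.
Proof. by rewrite /lin mxE; apply: eq_bigr => i _; rewrite mxE. Qed.

Lemma linD n (a x y : 'cV[R]_n) : lin a (x + y) = lin a x + lin a y.
Proof. by rewrite /lin mulmxDr mxE. Qed.

Lemma linZ n (a x : 'cV[R]_n) (c : R) : lin a (c *: x) = c * lin a x.
Proof. by rewrite /lin -scalemxAr mxE. Qed.

Lemma linM n m (a : 'cV[R]_n) (M : 'M[R]_(n, m)) x : lin a (M *m x) = lin (M^T *m a) x.
Proof. by rewrite /lin trmx_mul trmxK mulmxA. Qed.

Lemma lin0 n (x : 'cV[R]_n) : lin 0 x = 0.
Proof. by rewrite /lin trmx0 mul0mx mxE. Qed.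

Lemma lin_sum n (a : 'cV[R]_n) I (r : seq I) (F : I -> 'cV[R]_n) :
  lin a (\sum_(i <- r) F i) = \sum_(i <- r) lin a (F i).
Proof.
elim: r => [|x r IH]; first by rewrite !big_nil /lin mulmx0 mxE.
by rewrite !big_cons linD IH.
Qed.

Lemma lin_delta n (i : 'I_n) (x : 'cV[R]_n) : lin (delta_mx i 0) x = x i 0.
Proof. by rewrite /lin trmx_delta -rowE mxE. Qed.

Lemma coord_lin n (k : nat) : exists c : 'cV[R]_n, forall v, coord v k = lin c v.
Proof.
rewrite /coord; case: insubP => [i _ _|_].
  by exists (delta_mx i 0) => v; rewrite lin_delta.
by exists 0 => v; rewrite lin0.
Qed.

Definition affF n (q : 'cV[R]_n -> R) := exists c d, forall y, q y = lin c y + d.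

Lemma mapp_affF (X Y : obj R) (f : mor R X Y) (q : 'cV[R]_(odim Y) -> R) :
  affF q -> affF (fun x => q (mapp f x)).
Proof.
case=> c [d Hq]; exists ((mM f)^T *m c), (lin c (mb f) + d) => y.
by rewrite Hq /mapp linD linM addrA.
Qed.

Definition aff n (S : set 'cV[R]_n) (y : 'cV[R]_n) : Prop :=
  exists r (pts : 'I_r -> 'cV[R]_n) (w : 'I_r -> R),
    (forall l, S (pts l)) /\ \sum_l w l = 1 /\ y = \sum_l w l *: pts l.

Lemma aff_self n (S : set 'cV[R]_n) y : S y -> aff S y.
Proof.
move=> Sy; exists 1%N, (fun=> y), (fun=> 1); split=> //.
by rewrite big_ord1 scale1r big_ord1.
Qed.

Lemma affF_comb n (q : 'cV[R]_n -> R) r (pts : 'I_r -> 'cV[R]_n) (w : 'I_r -> R) :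
  affF q -> \sum_l w l = 1 -> q (\sum_l w l *: pts l) = \sum_l w l * q (pts l).
Proof.
case=> c [d Hq] Hw; rewrite Hq lin_sum.
have -> : d = \sum_l w l * d by rewrite -mulr_suml Hw mul1r.
rewrite -big_split /=; apply: eq_bigr => l _.
by rewrite Hq linZ mulrDr.
Qed.

Lemma mapp_comb (X Y : obj R) (f : mor R X Y) r (pts : 'I_r -> _) (w : 'I_r -> R) :
  \sum_l w l = 1 -> mapp f (\sum_l w l *: pts l) = \sum_l w l *: mapp f (pts l).
Proof.
move=> Hw; rewrite {1}/mapp mulmx_sumr.
have {1}-> : mb f = \sum_l w l *: mb f by rewrite -scaler_suml Hw scale1r.
rewrite -big_split /=; apply: eq_bigr => l _.
by rewrite /mapp scalerDr scalemxAr.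
Qed.

Lemma aff_mapp (X Y : obj R) (f : mor R X Y) (S : set 'cV[R]_(odim X)) (T : set 'cV[R]_(odim Y)) y :
  (forall x, S x -> T (mapp f x)) -> aff S y -> aff T (mapp f y).
Proof.
move=> ST [r [pts [w [Sp [Hw ->]]]]].
exists r, (fun l => mapp f (pts l)), w; split; first by move=> l; apply: ST.
by split=> //; apply: mapp_comb.
Qed.

Lemma aff2 n (S : set 'cV[R]_n) u v s : S u -> S v -> aff S ((1 - s) *: u + s *: v).
Proof.
move=> Su Sv; exists 2%N, (fun l : 'I_2 => if l == ord0 then u else v),
  (fun l : 'I_2 => if l == ord0 then 1 - s else s).
split; first by move=> l; case: ifP.
by rewrite !big_ord_recl !big_ord0 /= !addr0 subrK.
Qed.

Lemma affF2 n (q : 'cV[R]_n -> R) u v s : affF q ->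
  q ((1 - s) *: u + s *: v) = (1 - s) * q u + s * q v.
Proof.
case=> c [d Hq]; rewrite !Hq linD !linZ.
by rewrite !mulrDr !mulrBl !mul1r addrACA -!addrA [d + _]addrC !addrA subrK.
Qed.

End Basic.

End FileP1.

Section FileP2.
Local Open Scope ring_scope.
Local Open Scope classical_set_scope.

Lemma seteq T (A B : set T) : (forall x, A x <-> B x) -> A = B.
Proof. by move=> H; apply/funext => x; apply/propext; apply: H. Qed.

Section SLlemmas.
Variable R : realType.

Lemma linN n (a x : 'cV[R]_n) : lin (- a) x = - lin a x.
Proof. by rewrite /lin linearN /= mulNmx mxE. Qed.

Lemma sl_set0 n : semilinear (set0 : set 'cV[R]_n).
Proof.
have -> : (set0 : set 'cV[R]_n) = [set x | 0 < lin 0 x + 0].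
  by apply: seteq => x /=; rewrite lin0 addr0 ltxx.
exact: sl_half.
Qed.

Lemma sl_preim n m (M : 'M[R]_(n, m)) (b : 'cV[R]_n) (S : set 'cV[R]_n) :
  semilinear S -> semilinear [set x : 'cV[R]_m | S (M *m x + b)].
Proof.
elim=> [a c | A _ IH | A B _ IHA _ IHB].
- have -> : [set x : 'cV[R]_m | 0 < lin a (M *m x + b) + c]
            = [set x | 0 < lin (M^T *m a) x + (lin a b + c)].
    by apply: seteq => x /=; rewrite linD linM addrA.
  exact: sl_half.
- exact: sl_compl IH.
- exact: sl_union IHA IHB.
Qed.

Lemma sl_has n (p : 'cV[R]_n) (s : seq 'I_n) :
  semilinear [set x : 'cV[R]_n | has (fun i => x i 0 != p i 0) s].
Proof.
elim: s => [|i s IH].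
  have -> : [set x : 'cV[R]_n | has (fun i => x i 0 != p i 0) [::]] = set0.
    by apply: seteq => x.
  exact: sl_set0.
have -> : [set x : 'cV[R]_n | has (fun i => x i 0 != p i 0) (i :: s)] =
  ([set x | 0 < lin (delta_mx i 0) x + (- p i 0)] `|`
   [set x | 0 < lin (- delta_mx i 0) x + p i 0]) `|`
  [set x : 'cV[R]_n | has (fun i => x i 0 != p i 0) s].
  apply: seteq => x /=; rewrite linN !lin_delta subr_gt0 addrC subr_gt0.
  split.
    case/orP => [|->]; last by right.
    by rewrite neq_lt => /orP [] h; left; [right|left].
  case=> [[] h|->]; last by rewrite orbT.
    by rewrite gt_eqF.
  by rewrite lt_eqF.
by apply: sl_union => //; apply: sl_union; apply: sl_half.
Qed.

Lemma sl_single n (p : 'cV[R]_n) : semilinear [set x : 'cV[R]_n | x = p].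
Proof.
have -> : [set x : 'cV[R]_n | x = p] =
   ~` [set x : 'cV[R]_n | has (fun i => x i 0 != p i 0) (enum 'I_n)].
  apply: seteq => x /=; split.
    by move=> -> /hasP [i _]; rewrite eqxx.
  move=> H; apply/matrixP => i j; rewrite (ord1 j); apply/eqP.
  by apply: contra_notT H => Hn; apply/hasP; exists i => //; rewrite mem_enum.
by apply: sl_compl; apply: sl_has.
Qed.

End SLlemmas.

Section Dim.
Variable R : realType.

Lemma dim_up n (S T : set 'cV[R]_n) (a : 'cV[R]_n) b z k :
  (forall x, S x -> lin a x = b) -> (forall x, S x -> T x) -> T z -> lin a z != b ->
  aff_dim_ge S k -> aff_dim_ge T k.+1.
Proof.
move=> Sa ST Tz az [x0 [X [Sx0 [SX rX]]]].
set v := (z - x0)^T.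
have Xa : X *m a = 0.
  apply/matrixP => i j; rewrite (ord1 j) [RHS]mxE.
  have := Sa _ (SX i); rewrite linD (Sa _ Sx0) => H.
  have H2 : lin a (row i X)^T = 0.
    by move: H => /(congr1 (fun t => t - b)); rewrite addrC addKr subrr.
  rewrite -H2 /lin -trmx_mul mxE.
  by rewrite !mxE; apply: eq_bigr => l _; rewrite !mxE.
have va : (v *m a) 0 0 != 0.
  have -> : (v *m a) 0 0 = lin a (z - x0).
    by rewrite linE mxE; apply: eq_bigr => q _; rewrite !mxE mulrC.
  rewrite /lin mulmxBr mxE [X in _ + X]mxE -/(lin a z) -/(lin a x0) (Sa _ Sx0) subr_eq0 //.
rewrite /aff_dim_ge; exists x0; exists (col_mx v X : 'M_(k.+1, n)); split; first exact: ST.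
split.
  move=> i; pose i' : 'I_(1 + k) := i; have -> : i = i' by [].
  rewrite -(splitK i'); case: (split i') => j /=.
    rewrite (rowKu j v X) (ord1 j).
    have -> : row 0 v = v by apply/matrixP => r c; rewrite (ord1 r) mxE.
    by rewrite /v trmxK addrC subrK.
  by rewrite (rowKd j v X); apply: ST; apply: SX.
have dis : (v :&: X)%MS = 0.
  have /submxP [D1 HD1] : ((v :&: X)%MS <= v)%MS := capmxSl _ _.
  have /submxP [D2 HD2] : ((v :&: X)%MS <= X)%MS := capmxSr _ _.
  have : (v :&: X)%MS *m a = 0 by rewrite {1}HD2 -mulmxA Xa mulmx0.
  rewrite {1}HD1 -mulmxA [v *m a]mx11_scalar mul_mx_scalar => /eqP.
  rewrite scaler_eq0 (negbTE va) /= => /eqP D10.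
  by rewrite HD1 D10 mul0mx.
have E : \rank (col_mx v X) = (\rank v + \rank X)%N.
  by rewrite -addsmxE mxrank_disjoint_sum.
have v0 : (v != 0) by apply: contraNneq va => ->; rewrite mul0mx mxE.
by move: E; rewrite rank_rV v0 rX.
Qed.

Lemma adg_pos1 n (S : set 'cV[R]_n) k : aff_dim_ge S k.+1 -> aff_dim_ge S 1.
Proof.
case=> x0 [X [Sx0 [SX rX]]].
have [i Hi] : exists i, row i X != 0.
  apply/existsP; apply: contraT; rewrite negb_exists => /forallP H.
  have X0 : X = 0 by apply/row_matrixP => i; rewrite row0; apply/eqP; rewrite -[_ == _]negbK H.
  by move: rX; rewrite X0 mxrank0.
exists x0, (row i X); split=> //; split.
  move=> j; have -> : row j (row i X) = row i X by apply/matrixP => r c; rewrite (ord1 r) (ord1 j) !mxE.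
  exact: SX.
by rewrite rank_rV Hi.
Qed.

End Dim.

End FileP2.

Section FileP3.
Local Open Scope ring_scope.
Local Open Scope classical_set_scope.

Section Facets.
Variable R : realType.

Lemma adg_sub n (S T : set 'cV[R]_n) k : (forall x, S x -> T x) -> aff_dim_ge S k -> aff_dim_ge T k.
Proof.
move=> ST [x0 [X [Sx0 [SX rX]]]]; exists x0, X; split; first exact: ST.
by split=> // i; apply: ST.
Qed.

Lemma facet_cases n (A F : set 'cV[R]_n) : facet A F ->
  (F = set0 /\ ~ aff_dim_ge A 1) \/
  (exists k, aff_dim_ge A k.+1 /\ ~ aff_dim_ge A k.+2 /\ aff_dim_ge F k /\ ~ aff_dim_ge F k.+1).
Proof.
case=> [[a [b [_ ->]]]] [d [[[A0 d1]|[k [dk [Ak Ak1]]]] [[F0 d2]|[k' [dk' [Fk Fk1]]]]]].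
- exfalso; lia.
- exfalso; lia.
- left; split=> //.
  have k0 : k = 0%N by move: d2; rewrite dk; lia.
  by move: Ak1; rewrite k0.
- right; have kk : k = k'.+1 by lia.
  by exists k'; subst k; do !split.
Qed.

Lemma sum_unif m : \sum_(l < m.+1) (m.+1%:R : R)^-1 = 1.
Proof. by rewrite sumr_const card_ord -(mulr_natr (m.+1%:R)^-1) mulVf // pnatr_eq0. Qed.

Variables (n : nat) (A : set 'cV[R]_n) (m : nat) (Q : nat -> 'cV[R]_n -> R) (P : pred nat).
Hypothesis hQ : forall a, affF (Q a).
Hypothesis hA : A = [set y | aff A y /\ forall a, (a < m)%N -> 0 <= Q a y].
Hypothesis hP : forall a, (a < m)%N -> ~~ P a -> forall y, Q a y = 0.

Lemma A_Q y a : A y -> (a < m)%N -> 0 <= Q a y.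
Proof. by rewrite {1}hA => -[_ H]; apply: H. Qed.

Lemma A_mem y : aff A y -> (forall a, (a < m)%N -> 0 <= Q a y) -> A y.
Proof. by move=> H1 H2; rewrite hA. Qed.

Lemma facet_exists (F : set 'cV[R]_n) (a : 'cV[R]_n) (b : R) k :
  (forall x, A x -> lin a x <= b) -> F = A `&` [set x | lin a x = b] ->
  aff_dim_ge A k.+1 -> aff_dim_ge F k -> ~ aff_dim_ge F k.+1 ->
  exists i, (i < m)%N /\ (forall f, F f -> Q i f = 0) /\ ~ (forall x, A x -> Q i x = 0).
Proof.
move=> valid defF Ak Fk Fk1.
have FA : forall x, F x -> A x by move=> x; rewrite defF => -[].
have Fab : forall x, F x -> lin a x = b by move=> x; rewrite defF => -[].
have [z [Az azb]] : exists z, A z /\ lin a z < b.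
  apply: contrapT => H; apply: Fk1; apply: adg_sub Ak => x Ax; rewrite defF; split=> //.
  apply/eqP; rewrite eq_le valid //=; apply: contrapT => /negP; rewrite -ltNge => h.
  by apply: H; exists x.
case: Fk => f0 [_ [Ff0 _]].
apply: contrapT => H.
have H' : forall i, (i < m)%N -> (forall f, F f -> Q i f = 0) -> forall x, A x -> Q i x = 0.
  move=> i im HF; apply: contrapT => HA; apply: H; exists i; split=> //.
pose g i := match pselect (exists f, F f /\ 0 < Q i f) with
            | left H => proj1_sig (cid H) | right _ => f0 end.
have gF : forall i, F (g i).
  by move=> i; rewrite /g; case: pselect => [h|//]; case: (cid h) => f [].
have gQ : forall i, (exists f, F f /\ 0 < Q i f) -> 0 < Q i (g i).
  by move=> i h; rewrite /g; case: pselect => [h'|//]; case: (cid h') => f [].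
pose fs := \sum_(l < m.+1) (m.+1%:R : R)^-1 *: g l.
have affs : aff A fs.
  by exists m.+1, (fun l : 'I_m.+1 => g l), (fun=> (m.+1%:R)^-1); split=> [l|]; [apply: FA | rewrite sum_unif].
have Qfs : forall i, Q i fs = \sum_(l < m.+1) (m.+1%:R)^-1 * Q i (g l).
  by move=> i; rewrite affF_comb // sum_unif.
have Afs : A fs.
  apply: A_mem => // i im; rewrite Qfs; apply: sumr_ge0 => l _.
  by rewrite mulr_ge0 ?invr_ge0 // A_Q //; apply: FA.
have lfs : lin a fs = b.
  rewrite lin_sum (eq_bigr (fun=> (m.+1%:R)^-1 * b)); first by rewrite -mulr_suml sum_unif mul1r.
  by move=> l _; rewrite linZ Fab.
have Qcase : forall i, (i < m)%N -> 0 < Q i fs \/ (Q i fs = 0 /\ Q i z = 0).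
  move=> i im; case: (pselect (exists f, F f /\ 0 < Q i f)) => [h|h].
    left; rewrite Qfs (bigD1 (@Ordinal m.+1 i (ltnW im))) //=.
    apply: ltr_pwDl.
      by rewrite mulr_gt0 // ?invr_gt0 ?ltr0n //; apply: gQ.
    by apply: sumr_ge0 => l _; rewrite mulr_ge0 ?invr_ge0 // A_Q //; apply: FA.
  right; have HF : forall f, F f -> Q i f = 0.
    move=> f Ff; apply/eqP; rewrite eq_le A_Q ?andbT //; last by apply: FA.
    by rewrite leNgt; apply/negP => hq; apply: h; exists f.
  split; first by apply: HF; rewrite defF.
  by apply: (H' i im HF).
pose K := \sum_(i < m) `|Q i z| / Q i fs.
have K0 : 0 <= K.
  by apply: sumr_ge0 => i _; rewrite divr_ge0 // A_Q.
pose t := (K + 1)^-1.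
have t0 : 0 < t by rewrite invr_gt0; apply: ltr_wpDl.
pose y := (1 - (- t)) *: fs + (- t) *: z.
have Ay : A y.
  apply: A_mem; first by apply: aff2.
  move=> i im; rewrite affF2 //.
  case: (Qcase i im) => [q0|[-> ->]]; last by rewrite !mulr0 addr0.
  have tz : t * `|Q i z| <= Q i fs.
    have h1 : `|Q i z| / Q i fs <= K.
      rewrite /K (bigD1 (@Ordinal m i im)) //= lerDl.
      by apply: sumr_ge0 => j _; rewrite divr_ge0 // A_Q.
    have h2 : `|Q i z| <= K * Q i fs by rewrite -ler_pdivrMr.
    rewrite /t mulrC ler_pdivrMr ?(ltr_wpDl K0) //.
    by apply: (le_trans h2); rewrite mulrC ler_wpM2l ?(ltW q0) // lerDl.
  have h3 : t * Q i z <= t * `|Q i z| by rewrite ler_wpM2l ?(ltW t0) // real_ler_norm // num_real.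
  have h4 : 0 <= t * Q i fs by rewrite mulr_ge0 ?(ltW t0) ?(ltW q0).
  rewrite opprK mulrDl mul1r mulNr; lra.
have := valid _ Ay.
rewrite /y !linD !linZ lfs.
have : 0 < t * (b - lin a z) by rewrite mulr_gt0 // subr_gt0.
rewrite mulrBr => h5; rewrite opprK mulrDl mul1r mulNr; lra.
Qed.

Lemma facet_index F : facet A F -> aff_dim_ge A 1 ->
  exists i, (i < m)%N /\ P i /\ F = [set x | A x /\ Q i x = 0].
Proof.
move=> fF A1; case: (facet_cases fF) => [[_ nA1]|[k [Ak [Ak2 [Fk Fk1]]]]]; first by [].
case: fF => [[a [b [valid defF]]] _].
have FA : forall x, F x -> A x by move=> x; rewrite defF => -[].
have Fab : forall x, F x -> lin a x = b by move=> x; rewrite defF => -[].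
have [i [im [HF HA]]] := facet_exists valid defF Ak Fk Fk1.
have [x' [Ax' Qx']] : exists x', A x' /\ Q i x' != 0.
  apply: contrapT => H; apply: HA => x Ax; apply/eqP; apply: contrapT => /negP h.
  by apply: H; exists x.
exists i; split=> //; split.
  apply: contrapT => /negP nP; apply: HA => x _; exact: hP im nP x.
apply: seteq => x; split; first by move=> Fx; split; [apply: FA | apply: HF].
case=> Ax Qx; apply: contrapT => nF.
have lx : lin a x != b by apply/eqP => h; apply: nF; rewrite defF.
have Ai := @dim_up _ _ F [set x | A x /\ Q i x = 0] a b x k Fab
  (fun y Fy => conj (FA y Fy) (HF y Fy)) (conj Ax Qx) lx Fk.
have [c [d Hq]] := hQ i.
have Ai2 := @dim_up _ _ [set x | A x /\ Q i x = 0] A c (- d) x' k.+1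
  (fun y '(conj _ Qy) => etrans (etrans (esym (addrK d (lin c y))) (congr1 (fun u => u - d) (etrans (esym (Hq y)) Qy))) (sub0r d))
  (fun y '(conj Ay _) => Ay) Ax' _ Ai.
apply: Ak2; apply: Ai2.
by apply/eqP => h; move: Qx'; rewrite Hq h addNr eqxx.
Qed.

Lemma nth_In T (x0 : T) (s : seq T) i : (i < size s)%N -> List.In (nth x0 s i) s.
Proof.
elim: s i => [//|x s IH] [|i] /= h; first by left.
by right; apply: IH.
Qed.

Lemma PL (Fs : seq (set 'cV[R]_n)) :
  (forall i j, (i < j)%N -> (j < size Fs)%N -> nth set0 Fs i <> nth set0 Fs j) ->
  (forall F, List.In F Fs -> facet A F) ->
  (size Fs <= maxn 1 (count P (iota 0 m)))%N.
Proof.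
move=> dist fac.
have fac' : forall l, (l < size Fs)%N -> facet A (nth set0 Fs l).
  by move=> l hl; apply: fac; apply: nth_In.
case: (pselect (aff_dim_ge A 1)) => A1.
  have Hex : forall l, exists i, (l < size Fs)%N ->
      (i < m)%N /\ P i /\ nth set0 Fs l = [set x | A x /\ Q i x = 0].
    move=> l; case: (ltnP l (size Fs)) => hl; last by exists 0%N => h; exfalso; lia.
    by have [i Hi] := facet_index (fac' l hl) A1; exists i.
  have [phi Hphi] := choice Hex.
  apply: (leq_trans _ (leq_maxr _ _)).
  rewrite -size_filter -(size_iota 0 (size Fs)) -(size_map phi).
  apply: uniq_leq_size.
    rewrite map_inj_in_uniq ?iota_uniq // => l1 l2; rewrite !mem_iota !add0n => h1 h2 e.
    have E : nth set0 Fs l1 = nth set0 Fs l2.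
      by case: (Hphi _ h1) => _ [_ ->]; case: (Hphi _ h2) => _ [_ ->]; rewrite e.
    case: (ltngtP l1 l2) => // h; first by case: (dist _ _ h h2).
    by case: (dist _ _ h h1).
  move=> x /mapP [l]; rewrite mem_iota add0n => hl ->.
  by case: (Hphi _ hl) => h1 [h2 _]; rewrite mem_filter h2 mem_iota.
have F0 : forall l, (l < size Fs)%N -> nth set0 Fs l = set0.
  move=> l hl; case: (facet_cases (fac' l hl)) => [[//]|[k [Ak _]]].
  by case: A1; apply: adg_pos1 Ak.
apply: (leq_trans _ (leq_maxl _ _)); rewrite leqNgt; apply/negP => h.
by apply: (dist 0%N 1%N) => //; rewrite !F0 // ltnW.
Qed.


End Facets.

End FileP3.

Section FileP4.
Local Open Scope ring_scope.
Local Open Scope classical_set_scope.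

Section Cone.
Variable R : realType.
Variable V : seq (obj R).
Variable EE : forall i j : nat, seq (mor R (vtx V i) (vtx V j)).
Variable k : nat.
Variable Jt : pred nat.
Hypothesis Hsz : forall j, size (EE k j) = Jt j.
Hypothesis Hlim : is_limit_cone V EE Jt k.

Local Notation D i := (oset (vtx V i)).

Definition pk j (y : 'cV[R]_(odim (vtx V k))) : 'cV[R]_(odim (vtx V j)) :=
  if EE k j is e :: _ then mapp e y else 0.
Definition Mpk j : 'M[R]_(odim (vtx V j), odim (vtx V k)) :=
  if EE k j is e :: _ then mM e else 0.
Definition bpk j : 'cV[R]_(odim (vtx V j)) :=
  if EE k j is e :: _ then mb e else 0.

Lemma pkE j y : pk j y = Mpk j *m y + bpk j.
Proof. by rewrite /pk /Mpk /bpk; case: (EE k j) => [|e r] //=; rewrite mul0mx addr0. Qed.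

Lemma pk_In j p y : List.In p (EE k j) -> mapp p y = pk j y.
Proof.
move=> Hp; have : (size (EE k j) <= 1)%N by rewrite Hsz; case: (Jt j).
rewrite /pk; move: Hp.
by case: (EE k j) => [|e [|e' r]] //= [->|[]].
Qed.

Lemma pk_ex j : Jt j -> exists p, List.In p (EE k j).
Proof.
move=> hj; have := Hsz j; rewrite hj.
by case: (EE k j) => [|e r] //= _; exists e; left.
Qed.

Lemma pk_maps j y : Jt j -> D k y -> D j (pk j y).
Proof.
move=> hj Dy; have [p Hp] := pk_ex hj; rewrite -(pk_In y Hp).
exact: mmaps.
Qed.

Lemma pk_aff j y : Jt j -> aff (D k) y -> aff (D j) (pk j y).
Proof.
move=> hj; have [p Hp] := pk_ex hj; rewrite -(pk_In y Hp).
by apply: aff_mapp => x; apply: mmaps.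
Qed.

Lemma pk_affF j (c : nat) : affF (fun y => coord (pk j y) c).
Proof.
have [cc Hc] := @coord_lin R (odim (vtx V j)) c.
exists ((Mpk j)^T *m cc), (lin cc (bpk j)) => y.
by rewrite pkE Hc linD linM.
Qed.

Lemma cone_aff y w1 w2 e : aff (D k) y -> Jt w1 -> Jt w2 -> List.In e (EE w1 w2) ->
  mapp e (pk w1 y) = pk w2 y.
Proof.
move=> [r [pts [w [Dp [Hw ->]]]]] h1 h2 He.
have [p1 Hp1] := pk_ex h1; have [p2 Hp2] := pk_ex h2.
rewrite -(pk_In _ Hp1) -(pk_In _ Hp2) !mapp_comb //.
apply: eq_bigr => l _; congr (_ *: _).
by case: Hlim => H _; apply: H h1 h2 _ _ _ He Hp1 Hp2 _ (Dp l).
Qed.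

Lemma obj0_all x : oset (obj0 R) x.
Proof. by rewrite /obj0 /= lin0 addr0 ltxx. Qed.

Lemma cone_inj w1 w2 : D k w1 -> D k w2 -> (forall j, Jt j -> pk j w1 = pk j w2) -> w1 = w2.
Proof.
move=> D1 D2 Hj.
have gm : forall j, Jt j -> forall x, oset (obj0 R) x -> D j (0 *m x + pk j w1).
  by move=> j hj x _; rewrite mul0mx add0r; apply: pk_maps.
pose g j (hj : Jt j) := @Mor R (obj0 R) (vtx V j) 0 (pk j w1) (gm j hj).
have u1m : forall x, oset (obj0 R) x -> D k (0 *m x + w1) by move=> x _; rewrite mul0mx add0r.
have u2m : forall x, oset (obj0 R) x -> D k (0 *m x + w2) by move=> x _; rewrite mul0mx add0r.
pose u1 := @Mor R (obj0 R) (vtx V k) 0 w1 u1m.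
pose u2 := @Mor R (obj0 R) (vtx V k) 0 w2 u2m.
case: Hlim => _ H; have [|u [_ Hu]] := H (obj0 R) g.
  move=> a b ha hb e He x _; rewrite /mapp /= !mul0mx !add0r.
  exact: cone_aff (aff_self D1) ha hb He.
have e1 : meq u u1.
  apply: Hu => j hj p Hp x _.
  by rewrite [mapp u1 x]/mapp [mapp (g j hj) x]/mapp /= !mul0mx !add0r (pk_In _ Hp).
have e2 : meq u u2.
  apply: Hu => j hj p Hp x _.
  by rewrite [mapp u2 x]/mapp [mapp (g j hj) x]/mapp /= !mul0mx !add0r (pk_In _ Hp) Hj.
have := e1 0 (@obj0_all 0); have := e2 0 (@obj0_all 0).
by rewrite /mapp /= !mul0mx !add0r => -> ->.
Qed.

Lemma cone_mem y : aff (D k) y -> (forall j, Jt j -> D j (pk j y)) -> D k y.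
Proof.
case=> r [pts [w [Dp [Hw ey]]]] Hy.
pose Z : 'M[R]_(odim (vtx V k), r) := \matrix_(i, l) pts l i 0.
pose lam : 'cV[R]_r := \col_l w l.
have Ze : forall l, Z *m delta_mx l 0 = pts l.
  by move=> l; rewrite -colE; apply/matrixP => i j; rewrite (ord1 j) !mxE.
have lamE : lam = \sum_l w l *: delta_mx l 0.
  apply/matrixP => i j; rewrite (ord1 j) mxE summxE (bigD1 i) //= big1 => [|l nl].
    by rewrite !mxE !eqxx mulr1 addr0.
  by rewrite !mxE eq_sym (negbTE nl) mulr0.
have ZlamE : Z *m lam = y.
  by rewrite lamE mulmx_sumr ey; apply: eq_bigr => l _; rewrite -scalemxAr Ze.
pose T := [set mu : 'cV[R]_r | D k (Z *m mu + 0)] `|` [set mu | mu = lam].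
have slT : semilinear T := @sl_union R r _ _ (sl_preim Z 0 (@osemilin R (vtx V k))) (sl_single lam).
pose X := @Obj R r T slT.
have TZ : forall mu, T mu -> aff (D k) (Z *m mu).
  move=> mu [h|->]; last by rewrite ZlamE; exists r, pts, w.
  by apply: aff_self; move: h => /=; rewrite addr0.
have gm : forall j (hj : Jt j) mu, oset X mu -> D j (Mpk j *m Z *m mu + bpk j).
  move=> j hj mu Tmu; rewrite -mulmxA -pkE.
  case: Tmu => [h|->]; last by rewrite ZlamE; apply: Hy.
  by move: h => /=; rewrite addr0; apply: pk_maps.
pose g j (hj : Jt j) := @Mor R X (vtx V j) (Mpk j *m Z) (bpk j) (gm j hj).
have gE : forall j hj mu, mapp (g j hj) mu = pk j (Z *m mu).
  by move=> j hj mu; rewrite /mapp /= pkE mulmxA.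
case: Hlim => _ H; have [|u [Hu _]] := H X g.
  move=> a b ha hb e He mu Tmu; rewrite !gE.
  exact: cone_aff (TZ mu Tmu) ha hb He.
have ue : forall l, mapp u (delta_mx l 0) = pts l.
  move=> l; have Tl : oset X (delta_mx l 0) by left; rewrite /= addr0 Ze.
  apply: cone_inj; [exact: (@mmaps R _ _ u _ Tl) | exact: Dp | move=> j hj].
  have [p Hp] := pk_ex hj.
  by rewrite -(pk_In _ Hp) (Hu j hj p Hp _ Tl) gE Ze.
have Tlam : oset X lam by right.
have := @mmaps R _ _ u _ Tlam; rewrite -/(mapp u lam).
suff -> : mapp u lam = y by [].
by rewrite lamE mapp_comb // ey; apply: eq_bigr => l _; rewrite ue.
Qed.

End Cone.

End FileP4.

Section FileP5.
Local Open Scope ring_scope.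
Local Open Scope classical_set_scope.

Section Inv.
Variable R : realType.
Variable C : limcomp R.
Local Notation V := (lc_V C).
Local Notation EE := (lc_E C).
Local Notation n0 := (lc_n0 C).
Local Notation J := (lc_J C).
Local Notation D i := (oset (vtx V i)).
Hypothesis HD0b : forall i j, (i < n0)%N -> (j < n0)%N -> forall e, List.In e (EE i j) -> basic e.
Hypothesis HD0has : forall i, (i < n0)%N -> exists j, (j < n0)%N /\ (EE i j <> [::] \/ EE j i <> [::]).
Hypothesis Hstep : forall t, (t < lc_steps C)%N ->
  (forall j, J t j -> (j < n0 + t)%N) /\ (forall j, size (EE (n0 + t)%N j) = J t j) /\
  is_limit_cone V EE (J t) (n0 + t)%N.
Hypothesis Hconstr : forall t t', (t < t')%N -> (t' < lc_steps C)%N -> J t' (n0 + t)%N ->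
  forall j, J t j -> J t' j.

Definition pos a := (a < n0)%N /\ D a <> setT.
Definition Cl kk w := w = kk \/ ((n0 <= kk)%N /\ J (kk - n0) w).
Definition fam := forall w : nat, 'cV[R]_(odim (vtx V w)).
Definition compat (W : nat -> Prop) (x : fam) := forall w1 w2, W w1 -> W w2 ->
  forall e, List.In e (EE w1 w2) -> mapp e (x w1) = x w2.
Definition Inv kk := exists Q : nat -> 'cV[R]_(odim (vtx V kk)) -> R,
  (forall a, affF (Q a)) /\
  D kk = [set y | aff (D kk) y /\ forall a, (a < n0)%N -> 0 <= Q a y] /\
  (forall a, (forall y, Q a y = 0) \/
     (pos a /\ Cl kk a /\ forall x : fam, compat (Cl kk) x -> Q a (x kk) = coord (x a) 0)).

Lemma target_setT a j e : (a < n0)%N -> (j < n0)%N -> List.In e (EE j a) -> D a = setT.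
Proof.
move=> ha hj He; have := HD0b hj ha He.
by case=> [[_ [_ [_ [-> _]]]]|[_ [_ [_ [-> _]]]]|[_ [_ [_ [-> _]]]]|[_ [_ [_ ->]]]].
Qed.

Lemma D0_shape a : (a < n0)%N -> D a = setT \/ D a = [set x | 0 <= coord x 0].
Proof.
move=> ha; have [j [hj [h|h]]] := HD0has ha.
  case E1: (EE a j) h => [//|e r] _.
  have : basic e by apply: (HD0b ha hj); rewrite E1; left.
  by case=> [[_ [-> _]]|[_ [-> _]]|[_ [-> _]]|[_ [-> _]]]; [left|left|right|left].
case E1: (EE j a) h => [//|e r] _; left.
by apply: (target_setT ha hj (e := e)); rewrite E1; left.
Qed.

Lemma pos_shape a : pos a -> D a = [set x | 0 <= coord x 0].
Proof. by case=> ha hT; case: (D0_shape ha). Qed.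

Lemma Inv_D0 kk : (kk < n0)%N -> Inv kk.
Proof.
move=> hk.
exists (fun a y => if asbool (a = kk /\ pos kk) then coord y 0 else 0).
split.
  move=> a; case: asboolP => _; last by exists 0, 0 => y; rewrite lin0 addr0.
  by have [c Hc] := @coord_lin R (odim (vtx V kk)) 0%N; exists c, 0 => y; rewrite Hc addr0.
split.
  apply: seteq => y; split.
    move=> Dy; split; first exact: aff_self.
    move=> a _; case: asboolP => [[_ pk]|_] //.
    by move: Dy; rewrite (pos_shape pk).
  case=> _ HQ; case: (pselect (D kk = setT)) => [->//|nT].
  have pk : pos kk by split.
  have := HQ kk hk; rewrite asboolT //.
  by rewrite (pos_shape pk).
move=> a; case: (asboolP (a = kk /\ pos kk)) => [[-> pk]|_]; last by left.
by right; split=> //; split; [left|].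
Qed.

Lemma Inv_lim t : (t < lc_steps C)%N -> (forall j, (j < n0 + t)%N -> Inv j) -> Inv (n0 + t)%N.
Proof.
move=> ht IH; have [Jlt [Hsz Hlim]] := Hstep ht.
have clos : forall j, J t j -> forall w, Cl j w -> J t w.
  move=> j hj w [->//|[hj0 hw]]; have jl := Jlt j hj.
  apply: (Hconstr (t := (j - n0)%N)) => //; first lia.
  by rewrite subnKC.
exists (fun a y => if asbool (pos a) && J t a then coord (pk EE (k := (n0 + t)%N) a y) 0 else 0).
split.
  move=> a; case: (asbool (pos a) && J t a); first exact: pk_affF.
  by exists 0, 0 => y; rewrite lin0 addr0.
split.
  apply: seteq => y; split.
    move=> Dy; split; first exact: aff_self.
    move=> a ha; case: asboolP => pa //=; case hJ: (J t a) => //=.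
    by have := pk_maps Hsz hJ Dy; rewrite (pos_shape pa).
  case=> affy HQ; apply: (cone_mem Hsz Hlim affy) => j hj.
  have jl := Jlt j hj; have [Qj [aQj [eqj dj]]] := IH j jl.
  rewrite eqj; split; first exact: pk_aff.
  move=> a ha; case: (dj a) => [-> //|[pa [cla hx]]].
  rewrite (hx (fun w => pk EE (k := (n0 + t)%N) w y)).
    by have := HQ a ha; rewrite asboolT // (clos _ hj _ cla).
  move=> w1 w2 c1 c2 e He.
  by apply: (cone_aff Hsz Hlim affy); [apply: (clos j hj) | apply: (clos j hj) |].
move=> a; case: (asboolP (pos a)) => pa /=; last by left.
case hJ: (J t a); last by left.
have cla : Cl (n0 + t)%N a by right; split; [apply: leq_addr | rewrite addKn].
right; split=> //; split=> // x cx.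
have [p Hp] := pk_ex Hsz hJ.
by rewrite -(pk_In Hsz _ Hp) (cx _ _ (or_introl erefl) cla p Hp).
Qed.

Lemma Inv_all kk : (kk < size V)%N -> Inv kk.
Proof.
elim/ltn_ind: kk => kk IHk hk.
case: (ltnP kk n0) => h; first exact: Inv_D0.
rewrite -[kk](subnKC h); apply: Inv_lim.
  rewrite /lc_steps; lia.
move=> j hj; apply: IHk; lia.
Qed.

Lemma count_pos : (count (fun a => asbool (pos a)) (iota 0 n0) <=
   \sum_(i < n0) \sum_(j < n0) size (EE i j))%N.
Proof.
rewrite -sum1_count big_mkcond /=.
have -> : iota 0 n0 = index_iota 0 n0 by rewrite /index_iota subn0.
rewrite big_mkord; apply: leq_sum => i _.
case: asboolP => // -[hi nT].
have [j [hj [h|h]]] := HD0has hi.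
  rewrite (bigD1 (Ordinal hj)) //=; case: (EE i j) h => [//|e r] _ /=; lia.
by case E1: (EE j i) h => [//|e r] _; case: nT; apply: (target_setT hi hj (e := e)); rewrite E1; left.
Qed.

Lemma cost_pos : (0 < size V)%N -> (n0 <= size V)%N -> (0 < lc_cost C)%N.
Proof.
move=> hV hn; rewrite /lc_cost /lc_steps.
case: (posnP n0) => [->|h0]; first by rewrite subn0 addn_gt0 hV.
have [j [hj [h|h]]] := HD0has h0.
  rewrite (bigD1 (Ordinal h0)) //= (bigD1 (Ordinal hj)) //=.
  by case: (EE 0 j) h => [//|e r] _ /=; lia.
rewrite (bigD1 (Ordinal hj)) //= (bigD1 (Ordinal h0)) //=.
by case: (EE j 0) h => [//|e r] _ /=; lia.
Qed.

End Inv.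

End FileP5.

Unset Implicit Arguments.

Theorem lemma6p13 (R : realType) (A : obj R) (c : nat) :
  lim_complexity_is A c ->
  forall Fs : seq (set 'cV[R]_(odim A)),
    (forall i j, i < j -> j < size Fs -> nth set0 Fs i <> nth set0 Fs j) ->
    (forall F, List.In F Fs -> facet (oset A) F) ->
    size Fs <= c ^ 2.
Proof.
move=> [[C [HC [[i [hi [f [g [gf fg]]]]] cost]]] _] Fs dist fac.
move: HC; rewrite /is_limcomp => -[Hn0 [Hfin [HD0out [HD0b [HD0has [Hstep Hconstr]]]]]].
have [Q [aQ [eqQ dQ]]] := Inv_all HD0b HD0has Hstep Hconstr hi.
have hQ : forall a, affF (fun x => Q a (mapp g x)) by move=> a; apply: mapp_affF.
have hA : oset A = [set y : 'cV[R]_(odim A) | aff (oset A) y /\ forall a, (a < lc_n0 C)%N -> (0 <= Q a (mapp g y))%R]%classic.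
  apply: seteq => y; split.
    move=> Ay; split; first exact: aff_self.
    move=> a ha; have := @mmaps R _ _ g _ Ay; rewrite -/(mapp g y) {1}eqQ => -[_ H].
    exact: H a ha.
  case=> affy HQ.
  have gy : oset (vtx (lc_V C) i) (mapp g y).
    rewrite eqQ; split; last exact: HQ.
    by apply: aff_mapp affy => x; apply: mmaps.
  have -> : y = mapp f (mapp g y).
    case: affy => r [pts [w [Ap [Hw ->]]]]; rewrite !mapp_comb //.
    by apply: eq_bigr => l _; rewrite fg.
  exact: (@mmaps R _ _ f _ gy).
have hP : forall a, (a < lc_n0 C)%N -> ~~ asbool (pos C a) -> forall y, Q a (mapp g y) = 0%R.
  move=> a ha npa y; case: (dQ a) => [->//|[pa _]].
  by move: npa; rewrite asboolT.
have := PL hQ hA hP dist fac.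
move/leq_trans; apply.
have c1 : 0 < c.
  rewrite -cost; apply: cost_pos => //; first by apply: leq_ltn_trans hi.
have cX := count_pos HD0b HD0has.
rewrite geq_max; apply/andP; split.
  nia.
have : count (fun a => asbool (pos C a)) (iota 0 (lc_n0 C)) <= c.
  by rewrite -cost /lc_cost; apply: (leq_trans cX); apply: leq_addl.
nia.
Qed.
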